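(* Let $X$ be a continuum and $K\subset X$ a subcontinuum. Suppose the quotient $X/K$ is coastal at the point $K$. Then there exists $y\in X-K$ such that $\kappa(K;y)$ is dense in $X$.
   Context: A continuum is a nondegenerate compact connected Hausdorff space. $X/K$ is the quotient of $X$ obtained by collapsing $K$ to a single point, also denoted $K$. For a subcontinuum $L$ of a continuum $Z$ and a point $p$, $\kappa(L;p)$ is the union of all subcontinua $M$ of $Z$ with $L\subset M$, $M\neq Z$, $p\notin M$. $Z$ is coastal at $z$ if $\kappa(\{z\};p)$ is dense in $Z$ for some $p\neq z$. *)

(* Defs.v *)
From HB Require Import structures.
From mathcomp Require Import all_boot all_order all_algebra.
From mathcomp Require Import all_classical all_reals all_analysis.
Set Implicit Arguments. Unset Strict Implicit. Unset Printing Implicit Defensive.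
Local Open Scope classical_set_scope.

Definition is_continuum (T : topologicalType) (A : set T) : Prop :=
  [/\ compact A, connected A & exists a b, [/\ A a, A b & a <> b]].

Definition continuum_space (T : topologicalType) : Prop :=
  hausdorff_space T /\ is_continuum [set: T].

Definition kappa (T : topologicalType) (L : set T) (p : T) : set T :=
  \bigcup_(M in [set M : set T | [/\ is_continuum M, L `<=` M,
                                     M <> [set: T] & ~ M p]]) M.

Definition coastal_at (T : topologicalType) (z : T) : Prop :=
  exists p : T, p <> z /\ dense (kappa [set z] p).

(* q : X -> Z realizes Z as the quotient X/K obtained by collapsing K to a
   point: q is surjective, Z carries the quotient topology, and q identifies
   exactly the pairs of points of K. *)
Definition collapse_quotient (X Z : topologicalType) (K : set X) (q : X -> Z)
  : Prop :=
  [/\ forall z : Z, exists x, q x = z,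
      forall U : set Z, open U <-> open (q @^-1` U)
    & forall x y : X, q x = q y <-> (x = y \/ (K x /\ K y))].

(* Main.v *)
Require Import Defs.
From HB Require Import structures.
From mathcomp Require Import all_boot all_order all_algebra.
From mathcomp Require Import all_classical all_reals all_analysis.
Set Implicit Arguments. Unset Strict Implicit.
Local Open Scope classical_set_scope.

Lemma sat_pre (X Z : Type) (q : X -> Z) (A : set X) :
  (forall a x, A a -> q x = q a -> A x) -> q @^-1` (q @` A) = A.
Proof.
move=> sat; apply/seteqP; split => x /=.
  by case=> a Aa qa; exact: (sat a x Aa (esym qa)).
by move=> Ax; exists x.
Qed.

Lemma sat_open (X Z : topologicalType) (q : X -> Z) (A : set X) :
  (forall U : set Z, open U <-> open (q @^-1` U)) ->
  (forall a x, A a -> q x = q a -> A x) -> open A -> open (q @` A).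
Proof. by move=> qo sat oA; apply/qo; rewrite sat_pre. Qed.

Lemma quot_closed (X Z : topologicalType) (q : X -> Z) (C : set Z) :
  (forall U : set Z, open U <-> open (q @^-1` U)) ->
  closed C <-> closed (q @^-1` C).
Proof.
move=> qo; rewrite -openC -[X in _ <-> X]openC; rewrite qo.
by rewrite preimage_setC.
Qed.

Lemma sat_closed (X Z : topologicalType) (q : X -> Z) (A : set X) :
  (forall U : set Z, open U <-> open (q @^-1` U)) ->
  (forall a x, A a -> q x = q a -> A x) -> closed A -> closed (q @` A).
Proof. by move=> qo sat cA; apply/(@quot_closed _ _ q _ qo); rewrite sat_pre. Qed.


Lemma satD (X Z : Type) (q : X -> Z) (K A : set X) :
  (forall x y : X, q x = q y <-> (x = y \/ (K x /\ K y))) ->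
  A `<=` ~` K -> forall a x, A a -> q x = q a -> A x.
Proof.
move=> qe AK a x Aa /qe [->//|[_ Ka]]; by case: (AK a Aa).
Qed.

Lemma satK (X Z : Type) (q : X -> Z) (K A : set X) :
  (forall x y : X, q x = q y <-> (x = y \/ (K x /\ K y))) ->
  K `<=` A -> forall a x, A a -> q x = q a -> A x.
Proof.
move=> qe KA a x Aa /qe [->//|[Kx _]]; exact: KA.
Qed.

Lemma sepK (X : topologicalType) (K : set X) (x : X) :
  hausdorff_space X -> compact [set: X] -> closed K -> ~ K x ->
  exists U V : set X, [/\ open U, open V, K `<=` U, V x & U `&` V = set0].
Proof.
move=> hX cX cK Kx.
have := @compact_regular X x setT hX cX filterT.
move=> /(_ _) /(_ (~` K)) [].
  by apply: open_nbhs_nbhs; split => //; rewrite openC.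
move=> D nD cDK.
exists (~` closure D), (interior D); split.
- by rewrite openC; exact: closed_closure.
- exact: open_interior.
- by move=> y Ky cy; exact: (cDK y cy Ky).
- exact: nD.
- apply/seteqP; split => // y [/= ncy /interior_subset Dy].
  by apply: ncy; exact: subset_closure.
Qed.


Lemma sepZK (X Z : topologicalType) (K : set X) (q : X -> Z) (x k0 : X) :
  hausdorff_space X -> compact [set: X] -> closed K ->
  (forall U : set Z, open U <-> open (q @^-1` U)) ->
  (forall x y : X, q x = q y <-> (x = y \/ (K x /\ K y))) ->
  ~ K x -> K k0 ->
  exists A B : set Z, [/\ open A, open B, A (q x), B (q k0) & A `&` B = set0].
Proof.
move=> hX cX cK qo qe Kx Kk0.
have [U [V [oU oV KU Vx UV]]] := sepK hX cX cK Kx.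
exists (q @` (V `&` ~` K)), (q @` U); split.
- apply: sat_open => //; last by apply: openI => //; rewrite openC.
  by apply: (satD qe) => ? [].
- by apply: sat_open => //; exact: (satK qe).
- by exists x.
- by exists k0 => //; exact: KU.
- apply/seteqP; split => // z [[v [Vv Kv] <-] [u Uu /qe [uv|[_ //]]]].
  have : (U `&` V) v by split => //; rewrite -uv. by rewrite UV.
Qed.

Lemma sepZ2 (X Z : topologicalType) (K : set X) (q : X -> Z) (x1 x2 : X) :
  hausdorff_space X -> closed K ->
  (forall U : set Z, open U <-> open (q @^-1` U)) ->
  (forall x y : X, q x = q y <-> (x = y \/ (K x /\ K y))) ->
  ~ K x1 -> ~ K x2 -> x1 <> x2 ->
  exists A B : set Z, [/\ open A, open B, A (q x1), B (q x2) & A `&` B = set0].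
Proof.
move=> hX cK qo qe K1 K2 x12.
move: hX; rewrite open_hausdorff => /(_ x1 x2) [].
  by apply/eqP.
move=> [U V] /= []; rewrite !inE => Ux1 Vx2 [oU oV /eqP UV].
have oK : open (~` K) by rewrite openC.
exists (q @` (U `&` ~` K)), (q @` (V `&` ~` K)); split.
- by apply: sat_open => //; [apply: (satD qe) => ? []|exact: openI].
- by apply: sat_open => //; [apply: (satD qe) => ? []|exact: openI].
- by exists x1.
- by exists x2.
- apply/seteqP; split => // z [[u [Uu Ku] <-] [v [Vv Kv] /qe [uv|[//]]]].
  have : (U `&` V) u by split => //; rewrite -uv.
  by move: UV => /eqP ->.
Qed.

Lemma quot_hausdorff (X Z : topologicalType) (K : set X) (q : X -> Z) :
  hausdorff_space X -> compact [set: X] -> closed K ->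
  collapse_quotient K q -> hausdorff_space Z.
Proof.
move=> hX cX cK [qs qo qe]; rewrite open_hausdorff => z1 z2 /eqP z12.
have [x1 e1] := qs z1; have [x2 e2] := qs z2; subst z1 z2.
have [K1|K1] := pselect (K x1); have [K2|K2] := pselect (K x2).
- by exfalso; apply: z12; apply/qe; right.
- have [A [B [oA oB Ax Bx AB]]] := sepZK hX cX cK qo qe K2 K1.
  exists (B, A) => /=; first by rewrite !inE.
  by split => //; rewrite setIC AB; exact/eqP.
- have [A [B [oA oB Ax Bx AB]]] := sepZK hX cX cK qo qe K1 K2.
  exists (A, B) => /=; first by rewrite !inE.
  by split => //; rewrite AB; exact/eqP.
- have x12 : x1 <> x2 by move=> e; apply: z12; rewrite e.
  have [A [B [oA oB Ax Bx AB]]] := sepZ2 hX cK qo qe K1 K2 x12.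
  exists (A, B) => /=; first by rewrite !inE.
  by split => //; rewrite AB; exact/eqP.
Qed.


Lemma clopen_full (X Z : topologicalType) (K : set X) (q : X -> Z) (M : set Z)
  (S O C : set X) :
  collapse_quotient K q -> closed (q @^-1` M) -> connected M ->
  open O -> closed C -> S = q @^-1` M `&` O -> S = q @^-1` M `&` C ->
  K `<=` S -> (exists k, K k) -> S = q @^-1` M.
Proof.
move=> [qs qo qe] cP cM oO cC SO SC KS [k Kk].
set P := q @^-1` M.
set S' := P `&` ~` O.
have cS' : closed S' by apply: closedI => //; exact: open_closedC.
have satS' : forall a x, S' a -> q x = q a -> S' x.
  apply: (satD qe) => x [Px nOx] Kx; apply: nOx.
  by have := KS x Kx; rewrite SO => -[].
have cS : closed S by rewrite SC; exact: closedI.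
have satS : forall a x, S a -> q x = q a -> S x by exact: (satK qe).
have SP : S `<=` P by rewrite SO => x [].
have qSM : q @` S = M.
  apply: cM.
  - by exists (q k); exists k => //; exact: KS.
  - exists (~` (q @` S')); first by rewrite openC; exact: sat_closed.
    apply/seteqP; split => z.
      move=> [s Ss <-]; split; first exact: SP.
      move=> [s' S's' /esym e]; have := satS' _ _ S's' e.
      by move: Ss; rewrite SO => -[_ Os] [_].
    move=> [Mz nz]; have [x e] := qs z; subst z.
    have [Ox|nOx] := pselect (O x).
      by exists x => //; rewrite SO.
    by exfalso; apply: nz; exists x.
  - exists (q @` S); first exact: sat_closed.
    apply/seteqP; split => z; last by case.
    by move=> Sz; split => //; case: Sz => s Ss <-; exact: SP.
apply/seteqP; split => // x Px.
have : (q @` S) (q x) by rewrite qSM.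
by case=> s Ss e; exact: (satS s x Ss (esym e)).
Qed.


Lemma pre_connected (X Z : topologicalType) (K : set X) (q : X -> Z) (M : set Z)
  (k : X) :
  collapse_quotient K q -> connected K -> K k ->
  closed (q @^-1` M) -> connected M -> M (q k) -> connected (q @^-1` M).
Proof.
move=> Hq cK Kk cP cM Mk.
have [qs qo qe] := Hq.
set P := q @^-1` M.
have KP : K `<=` P by move=> x Kx; rewrite /P /=; have -> : q x = q k by apply/qe; right.
move=> B [b Bb] [C1 oC1 BC1] [C2 cC2 BC2].
have [[x [Bx Kx]]|nBK] := pselect (exists x, B x /\ K x).
  have KB : K `&` B = K.
    apply: cK; first by exists x.
    - exists C1 => //; rewrite BC1; apply/seteqP; split => y.
        by move=> [Ky [_ Cy]].
      by move=> [Ky Cy]; split => //; split => //; exact: KP.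
    - exists C2 => //; rewrite BC2; apply/seteqP; split => y.
        by move=> [Ky [_ Cy]].
      by move=> [Ky Cy]; split => //; split => //; exact: KP.
  apply: (clopen_full Hq cP cM oC1 cC2 BC1 BC2) => //; last by exists k.
  by rewrite -KB => y [].
have SE : P `&` ~` C1 = P `&` ~` C2.
  apply/seteqP; split => y [Py nC]; split => // Cy; apply: nC.
    have By : B y by rewrite BC2.
    by move: By; rewrite BC1 => -[].
  have By : B y by rewrite BC1.
  by move: By; rewrite BC2 => -[].
have PC1 : P `&` ~` C1 = P.
  apply: (clopen_full (S := P `&` ~` C1) (O := ~` C2) (C := ~` C1) Hq cP cM).
  - by rewrite openC.
  - by rewrite closedC.
  - by [].
  - by [].
  - move=> y Ky; split; first exact: KP.
    by move=> C1y; apply: nBK; exists y; split => //; rewrite BC1; split => //; exact: KP.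
  - by exists k.
have : (P `&` ~` C1) b by rewrite PC1; move: Bb; rewrite BC1 => -[].
by move: Bb; rewrite BC1 => -[_ C1b] [_].
Qed.

Unset Implicit Arguments. Set Strict Implicit.

Theorem mainTheorem14 (X : topologicalType) (K : set X)
  (Z : topologicalType) (q : X -> Z) (k : X) :
  continuum_space X -> is_continuum K ->
  collapse_quotient K q -> K k ->
  coastal_at (q k) ->
  exists y : X, ~ K y /\ dense (kappa K y).
Proof.
move=> [hX [cX _ _]] [cK conK _] Hq Kk [p [pk dD]].
have [qs qo qe] := Hq.
have clK : closed K := compact_closed hX cK.
have hZ := quot_hausdorff hX cX clK Hq.
have [y ey] := qs p; subst p.
have Ky : ~ K y.
  by move=> Ky; apply: pk; apply/qe; right.
have KP : forall M : set Z, M (q k) -> K `<=` q @^-1` M.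
  by move=> M Mk x Kx; rewrite /=; have -> : q x = q k by apply/qe; right.
have fam : forall M : set Z,
    [/\ is_continuum M, [set q k] `<=` M, M <> [set: Z] & ~ M (q y)] ->
    [/\ is_continuum (q @^-1` M), K `<=` q @^-1` M, q @^-1` M <> [set: X]
      & ~ (q @^-1` M) y].
  move=> M [[cM conM [a [b [Ma Mb ab]]]] kM MT My].
  have Mk : M (q k) by exact: kM.
  have cP : closed (q @^-1` M) by apply/(quot_closed _ qo); exact: compact_closed.
  split => //.
  - split.
    + exact: (subclosed_compact cP cX).
    + exact: (pre_connected Hq conK Kk cP conM Mk).
    + have [xa ea] := qs a; have [xb eb] := qs b; subst a b.
      by exists xa, xb; split => // e; apply: ab; rewrite e.
  - exact: KP.
  - by move=> PT; apply: My; have : (q @^-1` M) y by rewrite PT.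
have [z0 [_ [M0 HM0 _]]] := dD setT (ex_intro _ (q k) I) openT.
have [HX0 KX0 _ _] := fam M0 HM0.
exists y; split => //.
move=> W [w0 Oo] oO.
have [[x [Ox nKx]]|nOK] := pselect (exists x, W x /\ ~ K x).
  have oO' : open (q @` (W `&` ~` K)).
    apply: sat_open => //; last by apply: openI => //; rewrite openC.
    by apply: (satD qe) => ? [].
  have [z [[x' [Ox' _] <-] [M HM Mx']]] := dD _ (ex_intro _ (q x) (ex_intro2 _ _ x (conj Ox nKx) erefl)) oO'.
  by exists x'; split => //; exists (q @^-1` M) => //; exact: fam.
have Ko : K w0.
  by apply: contrapT => nKo; apply: nOK; exists w0.
by exists w0; split => //; exists (q @^-1` M0) => //; [exact: fam | exact: KX0].
Qed.
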